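(* Let $A=\begin{pmatrix}a&\xi\\\overline\xi&c\end{pmatrix}$ and $B=\begin{pmatrix}1&0\\0&b\end{pmatrix}$ be positive definite ($a,c>0$, $b\ge1$, $|\xi|^2<ac$). Suppose that for some $m\ge0$, $a_j,b_j\in\mathbb{C}$ and $\alpha,\beta>0$ the nonzero function \[ \Phi=\sum_{j=0}^m\begin{pmatrix}a_j\phi^\alpha_j\\ b_j\phi^\beta_j\end{pmatrix} \] is an eigenfunction of $H_{A,B}$. Then either $\xi=0$ or $\alpha=\beta$.
   Context: $H_{A,B}:=B(-\partial_x^2)+Ax^2$ on $L^2(\mathbb{R};\mathbb{C}^2)$, self-adjoint on the domain of pairs of functions in $H^2(\mathbb{R})\cap\{f:\int|x^2f|^2<\infty\}$. For $\alpha>0$, $n\ge0$: $\phi^\alpha_n(x)=\alpha^{1/4}h_n(\alpha^{1/2}x)e^{-\alpha x^2/2}/\sqrt{2^nn!\sqrt\pi}$, where $h_n(x)=(-1)^ne^{x^2}\partial_x^n[e^{-x^2}]$ is the $n$-th Hermite polynomial. *)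

(* Defs.v *)
From Stdlib Require Import Reals.
From Coquelicot Require Import Coquelicot.

Open Scope R_scope.

Definition hermite (n : nat) (x : R) : R :=
  (-1) ^ n * exp (x ^ 2) * Derive_n (fun t => exp (- t ^ 2)) n x.

Definition hermite_fn (alpha : R) (n : nat) (x : R) : R :=
  Rpower alpha (1/4) * hermite n (sqrt alpha * x) * exp (- alpha * x ^ 2 / 2)
  / sqrt (2 ^ n * INR (Factorial.fact n) * sqrt PI).

Definition Cderive2 (f : R -> C) (x : R) : C :=
  (Derive_n (fun t => Re (f t)) 2 x, Derive_n (fun t => Im (f t)) 2 x).

Open Scope C_scope.

(* H_{A,B} with A = [[a, xi],[conj xi, c]], B = diag(1, b), applied to (f1, f2):
   B(-d^2/dx^2)(f1,f2) + x^2 A (f1,f2)   *)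
Definition H_AB_1 (a c b : R) (xi : C) (f1 f2 : R -> C) (x : R) : C :=
  - Cderive2 f1 x + RtoC (x ^ 2) * (RtoC a * f1 x + xi * f2 x).
Definition H_AB_2 (a c b : R) (xi : C) (f1 f2 : R -> C) (x : R) : C :=
  - (RtoC b * Cderive2 f2 x) + RtoC (x ^ 2) * (Cconj xi * f1 x + RtoC c * f2 x).

Definition Phi1 (m : nat) (aj : nat -> C) (alpha : R) (x : R) : C :=
  sum_n (fun j => aj j * RtoC (hermite_fn alpha j x)) m.
Definition Phi2 (m : nat) (bj : nat -> C) (beta : R) (x : R) : C :=
  sum_n (fun j => bj j * RtoC (hermite_fn beta j x)) m.

(* Main.v *)
From Stdlib Require Import Reals Lra Lia List Classical.
From Coquelicot Require Import Coquelicot.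
Require Import Defs.
Open Scope R_scope.

Fixpoint peval (l : list R) (x : R) : R :=
  match l with nil => 0 | c :: l' => c + x * peval l' x end.
Definition ispoly (f : R -> R) := exists l, forall x, f x = peval l x.

Lemma ispoly_ext f g : (forall x, f x = g x) -> ispoly f -> ispoly g.
Proof. intros H [l Hl]. exists l. intros x. rewrite <- H. auto. Qed.

Lemma ispoly_const c : ispoly (fun _ => c).
Proof. exists (c :: nil). intros x. simpl. ring. Qed.

Lemma ispoly_xmul f : ispoly f -> ispoly (fun x => x * f x).
Proof. intros [l Hl]. exists (0 :: l). intros x. simpl. rewrite Hl. ring. Qed.

Lemma peval_map k l x : peval (map (Rmult k) l) x = k * peval l x.
Proof. induction l; simpl; [ring|]. rewrite IHl. ring. Qed.

Lemma ispoly_scal k f : ispoly f -> ispoly (fun x => k * f x).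
Proof. intros [l Hl]. exists (map (Rmult k) l). intros x. rewrite Hl, peval_map. auto. Qed.

Fixpoint padd (l m : list R) : list R :=
  match l, m with
  | nil, _ => m
  | _, nil => l
  | a :: l', b :: m' => (a + b) :: padd l' m'
  end.

Lemma peval_padd l : forall m x, peval (padd l m) x = peval l x + peval m x.
Proof. induction l; intros m x; simpl; [ring|]. destruct m; simpl; [ring|].
  rewrite IHl. ring. Qed.

Lemma ispoly_add f g : ispoly f -> ispoly g -> ispoly (fun x => f x + g x).
Proof. intros [l Hl] [m Hm]. exists (padd l m). intros x. rewrite peval_padd, Hl, Hm. auto. Qed.

Lemma ispoly_comp_scal s f : ispoly f -> ispoly (fun x => f (s * x)).
Proof. intros [l Hl]. apply ispoly_ext with (fun x => peval l (s * x)).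
  { intros; rewrite Hl; auto. }
  clear Hl. induction l; simpl.
  - apply ispoly_const.
  - apply ispoly_add; [apply ispoly_const|].
    apply ispoly_ext with (fun x => x * (s * peval l (s * x))). { intros; ring. }
    apply ispoly_xmul, ispoly_scal. apply IHl.
Qed.

Lemma peval_deriv l : exists dp, ispoly dp /\ forall x, is_derive (peval l) x (dp x).
Proof. induction l as [|c l [dq [Hdq Hd]]].
  - exists (fun _ => 0). split; [apply ispoly_const|]. intros x. simpl.
    apply (is_derive_const 0).
  - exists (fun x => peval l x + x * dq x). split.
    + apply ispoly_add; [exists l; auto|]. apply ispoly_xmul; auto.
    + intros x. simpl.
      pose proof (is_derive_plus (fun _ => c) (fun t => t * peval l t) x 0 (1 * peval l x + x * dq x)) as HP.
      replace (peval l x + x * dq x) with (plus 0 (1 * peval l x + x * dq x)).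
      2:{ unfold plus; simpl. ring. }
      apply HP. auto_derive; auto.
      pose proof (is_derive_mult (fun t:R => t) (peval l) x 1 (dq x) (is_derive_id x) (Hd x)) as HM.
      exact (HM Rmult_comm).
Qed.

Lemma peval_dich l : (forall x, peval l x = 0) \/
  exists eps M, 0 < eps /\ forall x, M <= x -> eps <= Rabs (peval l x).
Proof. induction l as [|c l IH]; simpl.
  - left; auto.
  - destruct IH as [H0 | [eps [M [He HM]]]].
    + destruct (Req_dec c 0) as [Hc|Hc].
      * left. intros x. rewrite H0, Hc. ring.
      * right. exists (Rabs c), 0. split. apply Rabs_pos_lt; auto.
        intros x _. rewrite H0, Rmult_0_r, Rplus_0_r. lra.
    + right. exists 1, (Rmax M (Rmax 1 ((Rabs c + 1)/eps))). split; [lra|].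
      intros x Hx.
      assert (H1 : M <= x) by (eapply Rle_trans; [apply Rmax_l|apply Hx]).
      assert (H2 : (Rabs c + 1)/eps <= x).
      { eapply Rle_trans; [|apply Hx]. eapply Rle_trans; [|apply Rmax_r]. apply Rmax_r. }
      assert (H3 : 1 <= x).
      { eapply Rle_trans; [|apply Hx]. eapply Rle_trans; [|apply Rmax_r]. apply Rmax_l. }
      specialize (HM x H1).
      assert (H4 : Rabs c + 1 <= x * eps).
      { apply Rmult_le_compat_r with (r := eps) in H2; [|lra].
        unfold Rdiv in H2. rewrite Rmult_assoc, Rinv_l, Rmult_1_r in H2; lra. }
      assert (H5 : x * eps <= x * Rabs (peval l x)) by (apply Rmult_le_compat_l; lra).
      assert (H6 : Rabs (x * peval l x) = x * Rabs (peval l x)).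
      { rewrite Rabs_mult, Rabs_right; lra. }
      pose proof (Rabs_triang_inv (x * peval l x) (-c)) as T.
      replace (x * peval l x - - c) with (c + x * peval l x) in T by ring.
      rewrite Rabs_Ropp in T. lra.
Qed.

Lemma peval_bound l : exists K N, forall x, 1 <= x -> Rabs (peval l x) <= K * x ^ N.
Proof. induction l as [|c l [K [N HK]]]; simpl.
  - exists 0, 0%nat. intros. rewrite Rabs_R0. simpl; lra.
  - exists (Rabs c + K), (S N). intros x Hx.
    specialize (HK x Hx). pose proof (pow_R1_Rle x (S N) Hx) as P.
    simpl. eapply Rle_trans. apply Rabs_triang. rewrite Rabs_mult, (Rabs_right x) by lra.
    assert (Rabs c <= Rabs c * (x * x ^ N)).
    { simpl in P. pose proof (Rabs_pos c). nra. }
    assert (x * Rabs (peval l x) <= x * (K * x ^ N)) by (apply Rmult_le_compat_l; lra).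
    nra.
Qed.

Lemma exp_ge_pow y n : 0 <= y -> y ^ S n / INR (Factorial.fact (S n)) <= exp y.
Proof. intros Hy. eapply Rle_trans; [|apply (exp_ge_taylor y (S n) Hy)].
  rewrite tech5.
  assert (0 <= sum_f_R0 (fun k => y ^ k / INR (Factorial.fact k)) n).
  { apply cond_pos_sum. intros k. unfold Rdiv. apply Rmult_le_pos.
    apply pow_le; auto. left; apply Rinv_0_lt_compat, INR_fact_lt_0. }
  lra.
Qed.

Lemma exp_beats d eps K N M : 0 < d -> 0 < eps ->
  exists x, M <= x /\ 1 <= x /\ K * x ^ N < eps * exp (d * x ^ 2).
Proof. intros Hd He.
  set (c0 := d ^ S N / INR (Factorial.fact (S N))).
  assert (Hc0 : 0 < c0).
  { unfold c0, Rdiv. apply Rmult_lt_0_compat. apply pow_lt; auto. apply Rinv_0_lt_compat, INR_fact_lt_0. }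
  set (x := Rmax M (Rmax 1 ((Rabs K + 1)/(eps*c0)))).
  assert (H1 : M <= x) by apply Rmax_l.
  assert (H2 : (Rabs K + 1)/(eps*c0) <= x).
  { eapply Rle_trans; [|apply Rmax_r]. apply Rmax_r. }
  assert (H3 : 1 <= x). { eapply Rle_trans; [|apply Rmax_r]. apply Rmax_l. }
  exists x. split; [auto|split; [auto|]].
  assert (Hec : 0 < eps * c0) by (apply Rmult_lt_0_compat; auto).
  assert (H4 : Rabs K + 1 <= eps * c0 * x).
  { apply Rmult_le_compat_r with (r := eps*c0) in H2; [|lra].
    unfold Rdiv in H2. rewrite Rmult_assoc, Rinv_l, Rmult_1_r in H2; lra. }
  assert (H5 : x <= x ^ (S (S N))).
  { simpl. pose proof (pow_R1_Rle x N H3). nra. }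
  assert (H6 : eps * c0 * x <= eps * c0 * x ^ (S (S N))) by (apply Rmult_le_compat_l; lra).
  assert (HxN : 0 < x ^ N) by (apply pow_lt; lra).
  assert (H7 : K * x ^ N < eps * c0 * x ^ (S (S N)) * x ^ N).
  { pose proof (Rle_abs K). apply Rmult_lt_compat_r; auto. lra. }
  assert (H8 : c0 * x ^ (S (S N)) * x ^ N <= exp (d * x ^ 2)).
  { eapply Rle_trans; [|apply exp_ge_pow]. 2:{ pose proof (pow2_ge_0 x). nra. }
    unfold c0. rewrite Rpow_mult_distr, <- pow_mult.
    replace (2 * S N)%nat with (S (S N) + N)%nat by lia. rewrite pow_add. lra. }
  nra.
Qed.

Definition G (k x : R) := exp (k * x ^ 2).
Definition PG (k : R) (f : R -> R) := exists p, ispoly p /\ forall x, f x = p x * G k x.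

Lemma G_pos k x : 0 < G k x. Proof. apply exp_pos. Qed.

Lemma keyK k1 k2 p r : k1 < k2 -> ispoly p -> ispoly r ->
  (forall x, p x * G k2 x = r x * G k1 x) -> forall x, p x = 0.
Proof. intros Hk [lp Hp] [lr Hr] H.
  assert (E : forall x, peval lp x * exp ((k2 - k1) * x ^ 2) = peval lr x).
  { intros x. specialize (H x). rewrite Hp, Hr in H. unfold G in H.
    replace (k2 * x^2) with (k1 * x^2 + (k2 - k1) * x^2) in H by ring.
    rewrite exp_plus in H. pose proof (exp_pos (k1 * x^2)). nra. }
  destruct (peval_dich lp) as [Z | [eps [M [He HM]]]].
  { intros x; rewrite Hp; auto. }
  exfalso. destruct (peval_bound lr) as [K [N HK]].
  destruct (exp_beats (k2 - k1) eps K N M) as [x [Hx1 [Hx2 Hx3]]]; [lra|auto|].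
  specialize (HM x Hx1). specialize (HK x Hx2). rewrite <- E in HK.
  rewrite Rabs_mult, (Rabs_right (exp _)) in HK by (left; apply exp_pos).
  pose proof (exp_pos ((k2 - k1) * x ^ 2)). nra.
Qed.

Lemma PG_ext k f g : (forall x, f x = g x) -> PG k f -> PG k g.
Proof. intros H [p [Hp Hf]]. exists p. split; auto. intros; rewrite <- H; auto. Qed.

Lemma PG_zero k : PG k (fun _ => 0).
Proof. exists (fun _ => 0). split. apply ispoly_const. intros; ring. Qed.

Lemma PG_add k f g : PG k f -> PG k g -> PG k (fun x => f x + g x).
Proof. intros [p [Hp Hf]] [q [Hq Hg]]. exists (fun x => p x + q x). split.
  apply ispoly_add; auto. intros; rewrite Hf, Hg; ring. Qed.

Lemma PG_scal k c f : PG k f -> PG k (fun x => c * f x).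
Proof. intros [p [Hp Hf]]. exists (fun x => c * p x). split.
  apply ispoly_scal; auto. intros; rewrite Hf; ring. Qed.

Lemma PG_xmul k f : PG k f -> PG k (fun x => x * f x).
Proof. intros [p [Hp Hf]]. exists (fun x => x * p x). split.
  apply ispoly_xmul; auto. intros; rewrite Hf; ring. Qed.

Lemma PG_x2mul k f : PG k f -> PG k (fun x => x ^ 2 * f x).
Proof. intros H. apply PG_ext with (fun x => x * (x * f x)). { intros; ring. }
  apply PG_xmul, PG_xmul, H. Qed.

Lemma PG_is_derive k p : ispoly p -> exists q, ispoly q /\
  forall x, is_derive (fun y => p y * G k y) x (q x * G k x).
Proof. intros [l Hl]. destruct (peval_deriv l) as [dp [Hdp Hd]].
  exists (fun x => dp x + (2 * k) * (x * peval l x)). split.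
  { apply ispoly_add; auto. apply ispoly_scal, ispoly_xmul. exists l; auto. }
  intros x. apply is_derive_ext with (fun y => peval l y * G k y).
  { intros; rewrite Hl; auto. }
  pose proof (is_derive_mult (peval l) (G k) x (dp x) (G k x * (k * (2 * x))) (Hd x)) as HM.
  assert (HG : is_derive (G k) x (G k x * (k * (2 * x)))).
  { unfold G. auto_derive; auto. simpl. ring. }
  specialize (HM HG Rmult_comm).
  replace ((dp x + 2 * k * (x * peval l x)) * G k x) with
    (plus (mult (dp x) (G k x)) (mult (peval l x) (G k x * (k * (2 * x))))).
  exact HM. unfold plus, mult; simpl. ring.
Qed.

Lemma PG_Derive k f : PG k f -> PG k (fun x => Derive f x).
Proof. intros [p [Hp Hf]]. destruct (PG_is_derive k p Hp) as [q [Hq Hd]].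
  exists q. split; auto. intros x. rewrite (Derive_ext f (fun y => p y * G k y)) by auto.
  apply is_derive_unique. apply Hd. Qed.

Lemma PG_D2 k f : PG k f -> PG k (fun x => Derive_n f 2 x).
Proof. intros H. apply PG_ext with (fun x => Derive (fun y => Derive f y) x).
  { intros; reflexivity. }
  apply PG_Derive, PG_Derive, H. Qed.

Lemma hermite_D n : exists p, ispoly p /\ forall y,
  Derive_n (fun t => exp (- t ^ 2)) n y = p y * G (-1) y.
Proof. induction n as [|n [p [Hp H]]].
  - exists (fun _ => 1). split. apply ispoly_const. intros y. simpl. unfold G.
    rewrite Rmult_1_l. f_equal. ring.
  - assert (HP : PG (-1) (fun y => Derive_n (fun t => exp (- t ^ 2)) n y)) by (exists p; auto).
    destruct (PG_Derive _ _ HP) as [q [Hq Hd]]. exists q; split; auto.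
Qed.

Lemma hermite_poly n : ispoly (hermite n).
Proof. destruct (hermite_D n) as [p [Hp H]].
  apply ispoly_ext with (fun y => (-1) ^ n * p y).
  { intros y. unfold hermite. rewrite H. unfold G.
    assert (E : exp (y ^ 2) * exp (-1 * y ^ 2) = 1).
    { rewrite <- exp_plus. replace (y ^ 2 + -1 * y ^ 2) with 0 by ring. apply exp_0. }
    transitivity ((-1) ^ n * p y * (exp (y ^ 2) * exp (-1 * y ^ 2))); [|ring].
    rewrite E; ring. }
  apply ispoly_scal; auto. Qed.

Lemma hermite_fn_PG alpha n : PG (- alpha / 2) (hermite_fn alpha n).
Proof. exists (fun x => Rpower alpha (1/4) / sqrt (2 ^ n * INR (Factorial.fact n) * sqrt PI)
   * hermite n (sqrt alpha * x)). split.
  - apply ispoly_scal. apply ispoly_comp_scal with (f := hermite n), hermite_poly.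
  - intros x. unfold hermite_fn, G. replace (- alpha * x ^ 2 / 2) with (- alpha / 2 * x ^ 2) by field.
    unfold Rdiv. ring.
Qed.

Lemma x2_cancel p : ispoly p -> (forall x, x ^ 2 * p x = 0) -> forall x, p x = 0.
Proof. intros [l Hl] H. destruct (peval_dich l) as [Z | [eps [M [He HM]]]].
  { intros; rewrite Hl; auto. }
  exfalso. set (x := Rmax M 1). specialize (HM x (Rmax_l _ _)).
  assert (1 <= x) by apply Rmax_r. specialize (H x). rewrite Hl in H.
  assert (peval l x = 0). { apply Rmult_integral in H. destruct H; auto. nra. }
  rewrite H1, Rabs_R0 in HM. lra.
Qed.

Lemma PG_vanish k1 k2 f g : k1 < k2 -> PG k2 f -> PG k1 g ->
  (forall x, x ^ 2 * f x = g x) -> forall x, f x = 0.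
Proof. intros Hk [p [Hp Hf]] [r [Hr Hg]] H x. rewrite Hf.
  assert (Z : forall x, x ^ 2 * p x = 0).
  { apply (keyK k1 k2 (fun x => x ^ 2 * p x) r Hk); auto.
    - apply ispoly_ext with (fun x => x * (x * p x)). intros; ring.
      apply ispoly_xmul, ispoly_xmul, Hp.
    - intros y. rewrite <- Hg, <- H, Hf. ring. }
  rewrite (x2_cancel p Hp Z x). ring.
Qed.

Open Scope C_scope.
Definition CPG (k : R) (f : R -> C) := PG k (fun x => Re (f x)) /\ PG k (fun x => Im (f x)).

Lemma C0_eq (c : C) : Re c = 0%R -> Im c = 0%R -> c = 0.
Proof. destruct c as [r i]. simpl. intros -> ->. reflexivity. Qed.

Lemma CPG_ext k f g : (forall x, f x = g x) -> CPG k f -> CPG k g.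
Proof. intros H [H1 H2]. split; [eapply PG_ext; [|apply H1]|eapply PG_ext; [|apply H2]];
  intros; simpl; rewrite H; auto. Qed.

Lemma CPG_zero k : CPG k (fun _ => 0).
Proof. split; simpl; apply PG_zero. Qed.

Lemma CPG_add k f g : CPG k f -> CPG k g -> CPG k (fun x => f x + g x).
Proof. intros [F1 F2] [G1 G2]. split; simpl; apply PG_add; auto. Qed.

Lemma CPG_opp k f : CPG k f -> CPG k (fun x => - f x).
Proof. intros [F1 F2]. split; simpl.
  - apply PG_ext with (fun x => (-1) * Re (f x))%R. intros; unfold Re, Im; simpl; ring. apply PG_scal; auto.
  - apply PG_ext with (fun x => (-1) * Im (f x))%R. intros; unfold Re, Im; simpl; ring. apply PG_scal; auto.
Qed.

Lemma CPG_cmul k z f : CPG k f -> CPG k (fun x => z * f x).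
Proof. intros [F1 F2]. split; simpl.
  - apply PG_ext with (fun x => (Re z * Re (f x)) + (- Im z) * Im (f x))%R. intros; unfold Re, Im; simpl; ring.
    apply PG_add; apply PG_scal; auto.
  - apply PG_ext with (fun x => (Re z * Im (f x)) + (Im z) * Re (f x))%R. intros; unfold Re, Im; simpl; ring.
    apply PG_add; apply PG_scal; auto.
Qed.

Lemma CPG_x2 k f : CPG k f -> CPG k (fun x => RtoC (x ^ 2) * f x).
Proof. intros [F1 F2]. split; simpl.
  - apply PG_ext with (fun x => x ^ 2 * Re (f x))%R. intros; unfold Re, Im; simpl; ring. apply PG_x2mul; auto.
  - apply PG_ext with (fun x => x ^ 2 * Im (f x))%R. intros; unfold Re, Im; simpl; ring. apply PG_x2mul; auto.
Qed.

Lemma CPG_D2 k f : CPG k f -> CPG k (fun x => Cderive2 f x).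
Proof. intros [F1 F2]. split; simpl; unfold Cderive2; simpl.
  - apply (PG_D2 k (fun t => Re (f t))); auto.
  - apply (PG_D2 k (fun t => Im (f t))); auto.
Qed.

Lemma CPG_herm k c alpha n : k = (- alpha / 2)%R -> CPG k (fun x => c * RtoC (hermite_fn alpha n x)).
Proof. intros ->. apply CPG_cmul. split; simpl.
  - apply hermite_fn_PG.
  - apply PG_zero.
Qed.

Lemma CPG_Phi1 m aj alpha : CPG (- alpha / 2) (Phi1 m aj alpha).
Proof. unfold Phi1. induction m.
  - eapply CPG_ext; [|apply (CPG_herm _ (aj 0%nat) alpha 0 eq_refl)]. intros; rewrite sum_O; auto.
  - eapply CPG_ext; [|apply (CPG_add _ _ _ IHm (CPG_herm _ (aj (S m)) alpha (S m) eq_refl))].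
    intros; rewrite sum_Sn; auto.
Qed.

Lemma CPG_Phi2 m bj beta : CPG (- beta / 2) (Phi2 m bj beta).
Proof. apply CPG_Phi1. Qed.

Lemma CPG_vanish (k1 k2 : R) (z : C) (f u : R -> C) : (k1 < k2)%R -> z <> 0 -> CPG k2 f -> CPG k1 u ->
  (forall x, RtoC (x ^ 2) * (z * f x) = u x) -> forall x, f x = 0.
Proof. intros Hk Hz [F1 F2] Hu H.
  destruct (CPG_cmul k1 (/ z) u Hu) as [V1 V2].
  assert (H' : forall x, RtoC (x ^ 2) * f x = / z * u x).
  { intros x. rewrite <- H. field. auto. }
  intros x. apply C0_eq.
  - apply (PG_vanish k1 k2 (fun x => Re (f x)) (fun x => Re (/ z * u x)) Hk F1 V1).
    intros y. rewrite <- H'. unfold Re, Im; simpl; ring.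
  - apply (PG_vanish k1 k2 (fun x => Im (f x)) (fun x => Im (/ z * u x)) Hk F2 V2).
    intros y. rewrite <- H'. unfold Re, Im; simpl; ring.
Qed.

Lemma Cd2_zero (f : R -> C) : (forall t, f t = 0) -> forall x, Cderive2 f x = 0.
Proof. intros H x. unfold Cderive2. apply C0_eq; unfold Re, Im; cbn [fst snd].
  - rewrite (Derive_n_ext _ (fun _ => 0%R)). apply (Derive_n_const 1).
    intros t; rewrite H; reflexivity.
  - rewrite (Derive_n_ext _ (fun _ => 0%R)). apply (Derive_n_const 1).
    intros t; rewrite H; reflexivity.
Qed.

Lemma Cconj_nz (xi : C) : xi <> 0 -> Cconj xi <> 0.
Proof. intros H E. apply H. destruct xi as [r i]. unfold Cconj in E. simpl in E.
  injection E; intros E1 E2. apply C0_eq; simpl; lra. Qed.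

Theorem mainTheorem9 (a c b : R) (xi : C) (m : nat) (aj bj : nat -> C)
  (alpha beta : R)
  (ha : (0 < a)%R) (hc : (0 < c)%R) (hb : (1 <= b)%R)
  (hxi : (Cmod xi ^ 2 < a * c)%R)
  (halpha : (0 < alpha)%R) (hbeta : (0 < beta)%R)
  (hnz : exists x : R, Phi1 m aj alpha x <> 0 \/ Phi2 m bj beta x <> 0)
  (heig : exists lam : C, forall x : R,
      H_AB_1 a c b xi (Phi1 m aj alpha) (Phi2 m bj beta) x = lam * Phi1 m aj alpha x /\
      H_AB_2 a c b xi (Phi1 m aj alpha) (Phi2 m bj beta) x = lam * Phi2 m bj beta x) :
  xi = 0 \/ alpha = beta.
Proof.
  destruct heig as [lam Hl]. destruct (classic (xi = 0)) as [|Hxi]; [left; auto|right].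
  pose proof (CPG_Phi1 m aj alpha) as C1. pose proof (CPG_Phi2 m bj beta) as C2.
  unfold H_AB_1, H_AB_2 in Hl.
  set (P1 := Phi1 m aj alpha) in *. set (P2 := Phi2 m bj beta) in *.
  assert (Hc := Cconj_nz xi Hxi).
  destruct (Rtotal_order alpha beta) as [Hlt|[Heq|Hgt]]; auto; exfalso.
  - assert (Z1 : forall x, P1 x = 0).
    { apply (CPG_vanish (- beta / 2) (- alpha / 2) (Cconj xi) P1
        (fun x => lam * P2 x + RtoC b * Cderive2 P2 x - RtoC (x ^ 2) * (RtoC c * P2 x))); auto.
      lra.
      apply CPG_add. apply CPG_add. apply CPG_cmul; auto. apply CPG_cmul, CPG_D2; auto.
      apply CPG_opp, CPG_x2, CPG_cmul; auto.
      intros x. destruct (Hl x) as [_ E]. rewrite <- E. ring. }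
    assert (Z2 : forall x, P2 x = 0).
    { apply (CPG_vanish (- beta / 2 - 1) (- beta / 2) xi P2 (fun _ => 0)); auto.
      lra. apply CPG_zero.
      intros x. destruct (Hl x) as [E _]. rewrite Z1, (Cd2_zero P1 Z1) in E.
      replace (RtoC (x^2) * (xi * P2 x)) with (- 0 + RtoC (x^2) * (RtoC a * 0 + xi * P2 x)) by ring.
      rewrite E. ring. }
    destruct hnz as [x [H|H]]; apply H; auto.
  - assert (Z2 : forall x, P2 x = 0).
    { apply (CPG_vanish (- alpha / 2) (- beta / 2) xi P2
        (fun x => lam * P1 x + Cderive2 P1 x - RtoC (x ^ 2) * (RtoC a * P1 x))); auto.
      lra.
      apply CPG_add. apply CPG_add. apply CPG_cmul; auto. apply CPG_D2; auto.
      apply CPG_opp, CPG_x2, CPG_cmul; auto.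
      intros x. destruct (Hl x) as [E _]. rewrite <- E. ring. }
    assert (Z1 : forall x, P1 x = 0).
    { apply (CPG_vanish (- alpha / 2 - 1) (- alpha / 2) (Cconj xi) P1 (fun _ => 0)); auto.
      lra. apply CPG_zero.
      intros x. destruct (Hl x) as [_ E]. rewrite Z2, (Cd2_zero P2 Z2) in E.
      replace (RtoC (x^2) * (Cconj xi * P1 x)) with (- (RtoC b * 0) + RtoC (x^2) * (Cconj xi * P1 x + RtoC c * 0)) by ring.
      rewrite E. ring. }
    destruct hnz as [x [H|H]]; apply H; auto.
Qed.
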